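(* Let $b\ge2$ be an integer and let $w$ be a fixed block of $b$-ary digits of length $p\ge1$. For every $k\ge0$, the power series $Z_w(k)$ has radius of convergence at least $(b^p-1)^{-1/p}$. Moreover, for every $k\ge0$, $$\sum_{0\le j\le k}Z_w(j)(b^{-1})\le p\,(k+1)\,b^p.$$
   Context: Strings are finite sequences over $\{0,\dots,b-1\}$, including the empty string. $k_w(X)$ is the number of possibly overlapping occurrences of $w$ in the string $X$. $N_w(k,l)$ is the number of strings $X$ of length $l$ with $k_w(X)=k$, and $Z_w(k)=\sum_{l\ge0}N_w(k,l)t^l\in\mathbb{Z}[[t]]$. *)

(* Defs.v *)
From Stdlib Require Import Reals Lra Lia Arith List.
From Coquelicot Require Import Coquelicot.
Import ListNotations.
Open Scope R_scope.

(* Strings over {0,...,b-1} are lists of naturals with all entries < b. *)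

Fixpoint strings (b l : nat) : list (list nat) :=
  match l with
  | O => [ [] ]
  | S l' => flat_map (fun d => map (cons d) (strings b l')) (seq 0 b)
  end.

Definition is_prefix (w X : list nat) : bool :=
  if list_eq_dec Nat.eq_dec (firstn (length w) X) w then
    Nat.leb (length w) (length X)
  else false.

(* k_w(X): number of (possibly overlapping) occurrences of w in X,
   i.e. number of positions i with X[i..i+|w|-1] = w. *)
Fixpoint occ (w X : list nat) : nat :=
  match X with
  | [] => 0
  | _ :: t => (if is_prefix w X then 1 else 0) + occ w t
  end%nat.

Definition Nw (b : nat) (w : list nat) (k l : nat) : nat :=
  length (filter (fun X => Nat.eqb (occ w X) k) (strings b l)).

(* coefficient sequence of the power series Z_w(k) = sum_l N_w(k,l) t^l *)
Definition Zw (b : nat) (w : list nat) (k : nat) : nat -> R :=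
  fun l => INR (Nw b w k l).

(* Main.v *)
Require Import Defs.
From Stdlib Require Import Reals List.
From Coquelicot Require Import Coquelicot.
From Stdlib Require Import Lra Lia Arith.
Import ListNotations.
Open Scope R_scope.

Lemma ls_flat {A B} (f : B -> nat) (g : A -> list B) (L : list A) :
  list_sum (map f (flat_map g L)) = list_sum (map (fun x => list_sum (map f (g x))) L).
Proof.
  induction L as [|a L IH]; simpl; auto.
  rewrite map_app, list_sum_app, IH; reflexivity.
Qed.

Lemma strings_decomp (b : nat) : forall a l (f : list nat -> nat),
  list_sum (map f (strings b (a + l))) =
  list_sum (map (fun Y => list_sum (map (fun X => f (Y ++ X)) (strings b l))) (strings b a)).
Proof.
  induction a as [|a IH]; intros l f.
  - cbn [strings Nat.add map list_sum app].
    induction (strings b l) as [|x L IHL]; simpl; auto. simpl in IHL. lia.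
  - change (S a + l)%nat with (S (a + l)).
    cbn [strings]. rewrite !ls_flat. f_equal. apply map_ext. intro d.
    rewrite !map_map. rewrite (IH l (fun Z => f (d :: Z))). reflexivity.
Qed.

Lemma len_filter {A} (P : A -> bool) L :
  length (filter P L) = list_sum (map (fun x => if P x then 1%nat else 0%nat) L).
Proof. induction L as [|a L IH]; simpl; auto. destruct (P a); simpl; lia. Qed.

Lemma strings_len b l : length (strings b l) = (b ^ l)%nat.
Proof.
  induction l as [|l IH]; simpl; auto.
  rewrite length_flat_map.
  transitivity (list_sum (map (fun _ => b ^ l) (seq 0 b)))%nat.
  - f_equal. apply map_ext. intro. rewrite length_map; auto.
  - clear IH. generalize 0%nat. generalize (b ^ l)%nat. induction b as [|b IHb]; intros c s; simpl; auto.
Qed.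

Lemma in_strings b w : List.Forall (fun d => (d < b)%nat) w -> In w (strings b (length w)).
Proof.
  induction 1; simpl; auto.
  apply in_flat_map. exists x. split. apply in_seq; lia.
  apply in_map; auto.
Qed.

Lemma occ_app_ge w Y X : (occ w X <= occ w (Y ++ X))%nat.
Proof. induction Y; simpl; [lia|]. destruct (is_prefix w _); lia. Qed.

Lemma occ_w_app w X : w <> [] -> (S (occ w X) <= occ w (w ++ X))%nat.
Proof.
  intro Hw. destruct w as [|a w']; [congruence|].
  change ((a :: w') ++ X) with (a :: (w' ++ X)).
  cbn [occ].
  assert (is_prefix (a :: w') (a :: w' ++ X) = true).
  { unfold is_prefix. change (a :: w' ++ X) with ((a :: w') ++ X).
    rewrite firstn_app, firstn_all, Nat.sub_diag. simpl firstn. rewrite app_nil_r.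
    destruct (list_eq_dec _ _ _); [|congruence].
    apply Nat.leb_le. rewrite length_app. lia. }
  rewrite H. pose proof (occ_app_ge (a :: w') w' X). lia.
Qed.

Lemma ls_le {A} (f g : A -> nat) L : (forall x, f x <= g x)%nat ->
  (list_sum (map f L) <= list_sum (map g L))%nat.
Proof. intro H; induction L; simpl; auto. specialize (H a); lia. Qed.

Lemma ls_const {A} (c : nat) (L : list A) : list_sum (map (fun _ => c) L) = (length L * c)%nat.
Proof. induction L; simpl; lia. Qed.

Lemma ls_special {A} (h : A -> nat) (w : A) (A0 B : nat) L :
  In w L -> (forall Y, h Y <= B)%nat -> (h w <= A0)%nat -> (A0 <= B)%nat ->
  (list_sum (map h L) + B <= length L * B + A0)%nat.
Proof.
  intros Hin HB Hw HAB. induction L as [|a L IH]; [destruct Hin|].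
  destruct Hin as [<-|Hin].
  - simpl. pose proof (ls_le h (fun _ => B) L HB). rewrite ls_const in H. lia.
  - simpl. specialize (IH Hin). specialize (HB a). lia.
Qed.

Definition cnt (b : nat) (w : list nat) (k l : nat) : nat :=
  length (filter (fun X => Nat.leb (occ w X) k) (strings b l)).

Definition prevc (b : nat) (w : list nat) (k l : nat) : nat :=
  match k with O => O | S k' => cnt b w k' l end.

Lemma cnt_mono b w k l : (cnt b w k l <= cnt b w (S k) l)%nat.
Proof.
  unfold cnt. rewrite !len_filter. apply ls_le. intro X.
  destruct (Nat.leb_spec (occ w X) k); destruct (Nat.leb_spec (occ w X) (S k)); lia.
Qed.

Lemma cnt_le b w k l : (cnt b w k l <= b ^ l)%nat.
Proof. unfold cnt. rewrite <- strings_len. apply filter_length_le. Qed.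

Lemma cnt_rec b w k l : w <> [] -> List.Forall (fun d => (d < b)%nat) w ->
  (cnt b w k (length w + l) + cnt b w k l <= b ^ (length w) * cnt b w k l + prevc b w k l)%nat.
Proof.
  intros Hw Hd. unfold cnt at 1. rewrite len_filter, strings_decomp.
  rewrite <- (strings_len b (length w)).
  apply (ls_special _ w).
  - apply in_strings; auto.
  - intro Y. unfold cnt. rewrite len_filter. apply ls_le. intro X.
    pose proof (occ_app_ge w Y X).
    destruct (Nat.leb_spec (occ w (Y ++ X)) k); destruct (Nat.leb_spec (occ w X) k); lia.
  - destruct k as [|k]; simpl prevc.
    + transitivity (list_sum (map (fun _ : list nat => 0%nat) (strings b l))).
      * apply ls_le. intro X. pose proof (occ_w_app w X Hw).
        destruct (Nat.leb_spec (occ w (w ++ X)) 0); lia.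
      * rewrite ls_const; lia.
    + unfold cnt. rewrite len_filter. apply ls_le. intro X.
      pose proof (occ_w_app w X Hw).
      destruct (Nat.leb_spec (occ w (w ++ X)) (S k)); destruct (Nat.leb_spec (occ w X) k); lia.
  - destruct k; simpl; [lia|]. apply cnt_mono.
Qed.

Lemma cnt_sum b w k l : (cnt b w (S k) l = cnt b w k l + Nw b w (S k) l)%nat.
Proof.
  unfold cnt, Nw. induction (strings b l) as [|X L IH]; simpl; auto.
  destruct (Nat.leb_spec (occ w X) (S k)); destruct (Nat.leb_spec (occ w X) k);
  destruct (Nat.eqb_spec (occ w X) (S k)); simpl; lia.
Qed.

Lemma cnt_0 b w l : cnt b w 0 l = Nw b w 0 l.
Proof.
  unfold cnt, Nw. f_equal. apply filter_ext. intro X.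
  destruct (occ w X); reflexivity.
Qed.

Lemma Nw_le_cnt b w k l : (Nw b w k l <= cnt b w k l)%nat.
Proof. destruct k. rewrite cnt_0; lia. rewrite cnt_sum; lia. Qed.

Fixpoint sumR (f : nat -> R) (n : nat) : R :=
  match n with O => 0 | S n => sumR f n + f n end.

Lemma sumR_split f p L : sumR f (p + L) = sumR f p + sumR (fun l => f (p + l)%nat) L.
Proof. induction L; simpl. rewrite Nat.add_0_r; ring. rewrite Nat.add_succ_r. simpl. rewrite IHL; ring. Qed.

Lemma sumR_le f g n : (forall i, f i <= g i) -> sumR f n <= sumR g n.
Proof. intro H; induction n; simpl. lra. specialize (H n); lra. Qed.

Lemma sumR_lin f g a c n : sumR (fun i => a * f i + c * g i) n = a * sumR f n + c * sumR g n.
Proof. induction n; simpl. ring. rewrite IHn; ring. Qed.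

Lemma sumR_nonneg f n : (forall i, 0 <= f i) -> 0 <= sumR f n.
Proof. intro H; induction n; simpl. lra. specialize (H n); lra. Qed.

Lemma sumR_mono f p L : (forall i, 0 <= f i) -> sumR f L <= sumR f (p + L).
Proof.
  intro H. rewrite Nat.add_comm. induction p. rewrite Nat.add_0_r; lra.
  rewrite Nat.add_succ_r. simpl. specialize (H (L + p)%nat); lra.
Qed.

Definition prevg (g : nat -> nat -> R) k l := match k with O => 0 | S k' => g k' l end.

Lemma gen (g : nat -> nat -> R) (p : nat) s t C (M : nat -> R) :
  (forall k l, 0 <= g k l) -> 0 <= t -> s < 1 ->
  (forall k, sumR (g k) p <= C) ->
  (forall k l, g k (p + l)%nat <= s * g k l + t * prevg g k l) ->
  C <= (1 - s) * M O -> (forall k, C + t * M k <= (1 - s) * M (S k)) ->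
  forall k L, sumR (g k) L <= M k.
Proof.
  intros Hg Ht Hs HC Hrec HM0 HMS k.
  induction k as [|k IH]; intro L.
  - pose proof (sumR_split (g O) p L) as Hsp;
    pose proof (sumR_mono (g O) p L (Hg O)) as Hmo.
    assert (sumR (fun l => g O (p + l)%nat) L <= sumR (fun l => s * g O l + t * 0) L) as H1
      by (apply sumR_le; intro i; apply (Hrec O)).
    rewrite (sumR_lin (g O) (fun _ => 0)) in H1.
    assert (forall n, sumR (fun _ => 0) n = 0) as Z by (intro n; induction n; simpl; lra).
    rewrite Z in H1. specialize (HC O).
    apply Rmult_le_reg_l with (1 - s); [lra|]. nra.
  - pose proof (sumR_split (g (S k)) p L) as Hsp;
    pose proof (sumR_mono (g (S k)) p L (Hg (S k))) as Hmo.
    assert (sumR (fun l => g (S k) (p + l)%nat) L <= sumR (fun l => s * g (S k) l + t * g k l) L) as H1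
      by (apply sumR_le; intro i; apply (Hrec (S k))).
    rewrite (sumR_lin (g (S k)) (g k)) in H1.
    specialize (HC (S k)). specialize (IH L). specialize (HMS k).
    apply Rmult_le_reg_l with (1 - s); [lra|].
    assert (t * sumR (g k) L <= t * M k) by (apply Rmult_le_compat_l; lra).
    nra.
Qed.

Lemma series_bound (a : nat -> R) M : (forall n, 0 <= a n) -> (forall n, sumR a n <= M) ->
  ex_series a /\ Series a <= M.
Proof.
  intros Ha HM.
  assert (Hs : forall n, sum_n a n = sumR a (S n)).
  { induction n. rewrite sum_O. simpl; ring. rewrite sum_Sn, IHn. unfold plus; simpl. ring. }
  destruct (ex_finite_lim_seq_incr (sum_n a) M) as [l Hl].
  - intro n. rewrite !Hs. simpl. specialize (Ha (S n)). simpl in *. lra.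
  - intro n. rewrite Hs. apply HM.
  - assert (Hser : is_series a l) by exact Hl.
    split. exists l; exact Hser.
    rewrite (is_series_unique a l Hser).
    pose proof (is_lim_seq_le (sum_n a) (fun _ => M) l M) as H.
    simpl in H. apply H. intro n; rewrite Hs; apply HM. exact Hl. apply is_lim_seq_const.
Qed.

Lemma pow_lt_strict x y n : 0 <= x -> x < y -> (1 <= n)%nat -> x ^ n < y ^ n.
Proof.
  intros Hx Hxy Hn. induction n as [|n IH]; [lia|].
  destruct n. simpl; lra.
  assert (x ^ S n < y ^ S n) by (apply IH; lia).
  assert (0 <= x ^ S n) by (apply pow_le; lra).
  simpl in *. nra.
Qed.

Section S.
Variables (b : nat) (w : list nat).
Hypothesis Hb : (2 <= b)%nat.
Hypothesis Hw : w <> nil.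
Hypothesis Hdig : List.Forall (fun d => (d < b)%nat) w.

Definition gx (x : R) k l := INR (cnt b w k l) * x ^ l.

Lemma gx_nonneg x k l : 0 <= x -> 0 <= gx x k l.
Proof. intro; unfold gx. apply Rmult_le_pos. apply pos_INR. apply pow_le; auto. Qed.

Lemma gx_rec x k l : 0 <= x ->
  gx x k (length w + l) <= ((INR b ^ length w - 1) * x ^ length w) * gx x k l
    + x ^ length w * prevg (gx x) k l.
Proof.
  intro Hx. pose proof (cnt_rec b w k l Hw Hdig) as H.
  apply le_INR in H. rewrite !plus_INR, mult_INR, pow_INR in H.
  assert (Hp : prevg (gx x) k l = INR (prevc b w k l) * x ^ l)
    by (destruct k; simpl; unfold gx; simpl; ring).
  rewrite Hp. unfold gx. rewrite pow_add.
  assert (0 <= x ^ length w * x ^ l) by (apply Rmult_le_pos; apply pow_le; auto).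
  nra.
Qed.

Lemma gx_C x k : 0 <= x -> sumR (gx x k) (length w) <= sumR (fun l => (INR b * x) ^ l) (length w).
Proof.
  intro Hx. apply sumR_le. intro l. unfold gx. rewrite Rpow_mult_distr.
  apply Rmult_le_compat_r. apply pow_le; auto.
  rewrite <- pow_INR. apply le_INR. apply cnt_le.
Qed.

Lemma term_le_sum (f : nat -> R) n : (forall i, 0 <= f i) -> f n <= sumR f (S n).
Proof. intro H. simpl. pose proof (sumR_nonneg f n H). lra. Qed.

End S.

Fixpoint Mseq (C s t : R) (k : nat) : R :=
  match k with O => C / (1 - s) | S k => (C + t * Mseq C s t k) / (1 - s) end.

Theorem lemma1 (b p : nat) (w : list nat)
  (Hb : (2 <= b)%nat) (Hp : (1 <= p)%nat) (Hlen : length w = p)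
  (Hdig : List.Forall (fun d => (d < b)%nat) w) :
  (forall k : nat,
     Rbar_le (Finite (Rpower (INR b ^ p - 1) (- / INR p))) (CV_radius (Zw b w k)))
  /\
  (forall k : nat,
     sum_f_R0 (fun j => PSeries (Zw b w j) (/ INR b)) k
       <= INR p * INR (k + 1) * INR b ^ p).
Proof.
  assert (Hw : w <> nil) by (intro E; subst w; simpl in Hlen; lia).
  subst p. set (P := length w) in *.
  assert (HbR : 2 <= INR b) by (apply (le_INR 2); lia).
  assert (Hbp : INR b <= INR b ^ P).
  { rewrite <- (pow_1 (INR b)) at 1. apply Rle_pow; [lra|lia]. }
  assert (HPpos : 0 < INR P) by (apply lt_0_INR; lia).
  split.
  - intro k.
    set (B := INR b ^ P - 1).
    assert (HB : 1 <= B) by (unfold B; lra).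
    set (rho := Rpower B (- / INR P)).
    assert (Hrho : 0 < rho) by (unfold rho, Rpower; apply exp_pos).
    assert (HrhoP : rho ^ P = / B).
    { rewrite <- Rpower_pow by exact Hrho. unfold rho. rewrite Rpower_mult.
      replace (- / INR P * INR P) with (- (1)) by (field; lra).
      rewrite Rpower_Ropp, Rpower_1 by lra. reflexivity. }
    assert (Hin : forall x, 0 < x < rho -> Rbar_le x (CV_radius (Zw b w k))).
    { intros x [Hx0 Hx1].
      assert (Hs : B * x ^ P < 1).
      { assert (x ^ P < rho ^ P) by (apply pow_lt_strict; [lra|lra|unfold P; lia]).
        rewrite HrhoP in H. apply Rmult_lt_compat_l with (r := B) in H; [|lra].
        rewrite Rinv_r in H by lra. exact H. }
      set (C := sumR (fun l => (INR b * x) ^ l) P).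
      set (s := B * x ^ P). set (t := x ^ P).
      assert (Ht : 0 <= t) by (apply pow_le; lra).
      assert (Hg := gen (gx b w x) P s t C (Mseq C s t)
        (fun k l => gx_nonneg b w x k l ltac:(lra)) Ht Hs
        (fun k => gx_C b w x k ltac:(lra))
        (fun k l => gx_rec b w Hw Hdig x k l ltac:(lra))).
      assert (Hgk : forall L, sumR (gx b w x k) L <= Mseq C s t k).
      { intro L. apply Hg.
        - simpl. right. field. unfold s; lra.
        - intro j. simpl. right. field. unfold s; lra. }
      destruct (CV_radius_bounded (Zw b w k)) as [Hub _].
      apply Hub. exists (Mseq C s t k). intro n.
      rewrite Rabs_pos_eq.
      2:{ apply Rmult_le_pos. apply pos_INR. apply pow_le; lra. }
      eapply Rle_trans; [|apply (Hgk (S n))].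
      eapply Rle_trans; [|apply term_le_sum; intro i; apply gx_nonneg; lra].
      unfold gx, Zw. apply Rmult_le_compat_r. apply pow_le; lra.
      apply le_INR, Nw_le_cnt. }
    pose proof (CV_radius_ge_0 (Zw b w k)) as H0.
    destruct (CV_radius (Zw b w k)) as [r| |] eqn:Hr; simpl in *; auto.
    destruct (Rle_or_lt rho r) as [Hle|Hlt]; auto.
    exfalso. specialize (Hin ((r + rho) / 2)). simpl in Hin.
    assert ((r + rho) / 2 <= r) by (apply Hin; lra). lra.
  - set (x := / INR b).
    assert (Hx : 0 < x) by (unfold x; apply Rinv_0_lt_compat; lra).
    set (bp := INR b ^ P).
    assert (HxP : x ^ P = / bp) by (unfold x, bp; apply pow_inv).
    set (s := (bp - 1) * x ^ P). set (t := x ^ P).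
    assert (Hbp2 : 2 <= bp) by (unfold bp; lra).
    assert (Hs : s < 1) by (unfold s; rewrite HxP; replace ((bp - 1) * / bp) with (1 - / bp) by (field; lra); pose proof (Rinv_0_lt_compat bp ltac:(lra)); lra).
    assert (Ht : 0 <= t) by (apply pow_le; lra).
    set (M := fun k => INR P * INR (k + 1) * bp).
    assert (HC : forall k, sumR (gx b w x k) P <= INR P).
    { intro k. eapply Rle_trans. apply gx_C; lra.
      replace (INR b * x) with 1 by (unfold x; field; lra).
      right. assert (E : forall n, sumR (fun l => 1 ^ l) n = INR n).
      { intro n; induction n as [|n IH]. reflexivity. simpl sumR. rewrite IH, pow1, S_INR. ring. }
      apply E. }
    assert (Hgk : forall k L, sumR (gx b w x k) L <= M k).
    { apply (gen (gx b w x) P s t (INR P) M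
        (fun k l => gx_nonneg b w x k l ltac:(lra)) Ht Hs HC
        (fun k l => gx_rec b w Hw Hdig x k l ltac:(lra))).
      - unfold M, s, t. rewrite HxP. simpl. right. field. lra.
      - intro j. unfold M, s, t. rewrite HxP, !plus_INR, !S_INR. change (INR 0) with 0. right. field. lra. }
    assert (Hex : forall k, ex_series (gx b w x k) /\ Series (gx b w x k) <= M k).
    { intro k. apply series_bound. intro; apply gx_nonneg; lra. apply Hgk. }
    assert (HexZ : forall j, ex_series (fun l => Zw b w j l * x ^ l)).
    { intro j. apply (series_bound _ (M j)).
      - intro n. apply Rmult_le_pos. apply pos_INR. apply pow_le; lra.
      - intro L. eapply Rle_trans; [|apply (Hgk j L)]. apply sumR_le. intro i.
        unfold gx, Zw. apply Rmult_le_compat_r. apply pow_le; lra. apply le_INR, Nw_le_cnt. }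
    assert (Heq : forall k, sum_f_R0 (fun j => PSeries (Zw b w j) x) k = Series (gx b w x k)).
    { induction k as [|k IH].
      - simpl. unfold PSeries. apply Series_ext. intro n. unfold gx, Zw. rewrite cnt_0. reflexivity.
      - simpl. rewrite IH. unfold PSeries.
        rewrite <- Series_plus by (apply Hex || apply HexZ).
        apply Series_ext. intro n. unfold gx, Zw. rewrite cnt_sum, plus_INR. ring. }
    intro k. rewrite Heq. apply Hex.
Qed.
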